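(* Let $N,M$ be positive integers, let $\mathscr{A}\subset\mathscr{M}(N,M)$ and $\mathscr{B}\subset\mathscr{M}(M,N)$ be finite sets of real matrices, and let $\|\cdot\|$ be a submultiplicative norm on $\mathscr{M}(N,N)$. Suppose there is a periodic sequence $\{\bar B_n\}_{n\ge1}$ with $\bar B_n\in\mathscr{B}$ such that $\|A_n\bar B_n\cdots A_1\bar B_1\|\to0$ as $n\to\infty$ for every sequence $\{A_n\}_{n\ge1}$ with $A_n\in\mathscr{A}$. Then there exist constants $C>0$ and $\lambda\in(0,1)$ such that \[ \|A_n\bar B_n\cdots A_1\bar B_1\|\le C\lambda^n,\qquad n=1,2,\ldots, \] for every sequence $\{A_n\in\mathscr{A}\}$.
   Context: $\mathscr{M}(p,q)$ denotes the space of $p\times q$ real matrices with the topology of elementwise convergence. A norm on $\mathscr{M}(N,N)$ is submultiplicative if $\|XY\|\le\|X\|\,\|Y\|$ for all $X,Y$. *)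

(* Defs.v *)
From HB Require Import structures.
From mathcomp Require Import all_boot all_order all_algebra.
From mathcomp Require Import all_classical all_reals all_analysis.
From mathcomp Require Import Rstruct Rstruct_topology.
From Stdlib Require Import Rdefinitions.

Set Implicit Arguments.
Unset Strict Implicit.
Unset Printing Implicit Defensive.
Import Order.TTheory GRing.Theory Num.Theory.
Local Open Scope ring_scope.

Definition is_matrix_norm (N : nat) (nrm : 'M[R]_N -> R) : Prop :=
  [/\ forall X, 0 <= nrm X,
      forall X, nrm X = 0 -> X = 0,
      forall (a : R) X, nrm (a *: X) = `|a| * nrm X
    & forall X Y, nrm (X + Y) <= nrm X + nrm Y].

Definition submultiplicative (N : nat) (nrm : 'M[R]_N -> R) : Prop :=
  forall X Y : 'M[R]_N, nrm (X *m Y) <= nrm X * nrm Y.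

(* prodAB A B n = A_n B_n A_{n-1} B_{n-1} ... A_1 B_1 (sequences indexed from 1);
   prodAB A B 0 = identity. *)
Fixpoint prodAB (N M : nat) (A : nat -> 'M[R]_(N, M)) (B : nat -> 'M[R]_(M, N))
    (n : nat) : 'M[R]_N :=
  match n with
  | 0 => 1%:M
  | k.+1 => A k.+1 *m B k.+1 *m prodAB A B k
  end.

Definition periodic_seq (T : Type) (B : nat -> T) : Prop :=
  exists p : nat, (0 < p)%nat /\ forall n : nat, (1 <= n)%nat -> B (n + p)%nat = B n.

(* Main.v *)
Require Import Defs.
From HB Require Import structures.
From mathcomp Require Import all_boot all_order all_algebra.
From mathcomp Require Import all_classical all_reals all_analysis.
From mathcomp Require Import Rstruct Rstruct_topology.
From Stdlib Require Import Rdefinitions.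
From mathcomp Require Import lra zify ring.
Import Order.TTheory GRing.Theory Num.Theory.
Local Open Scope classical_set_scope.
Local Open Scope ring_scope.
Set Implicit Arguments.
Unset Strict Implicit.

Lemma prodAB_ext (N M : nat) (A A' : nat -> 'M[R]_(N, M)) (B B' : nat -> 'M[R]_(M, N)) (n : nat) :
  (forall i : nat, (1 <= i <= n)%nat -> A i = A' i) -> (forall i : nat, (1 <= i <= n)%nat -> B i = B' i) ->
  prodAB A B n = prodAB A' B' n.
Proof.
elim: n => [//|n IH] HA HB /=.
rewrite HA ?HB ?leqnn // IH // => i /andP[h1 h2]; [apply: HA|apply: HB]; 
  by rewrite h1 (leq_trans h2).
Qed.

Lemma prodAB_shift (N M : nat) (A : nat -> 'M[R]_(N, M)) (B : nat -> 'M[R]_(M, N)) (m n : nat) :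
  prodAB A B (n + m) = prodAB (fun i => A (i + m)%nat) (fun i => B (i + m)%nat) n *m prodAB A B m.
Proof.
elim: n => [|n IH] /=; first by rewrite add0n mul1mx.
by rewrite IH !mulmxA.
Qed.

Lemma fin_bound (T : eqType) (s : seq T) (Q : T -> nat -> Prop) :
  (forall a L1 L2, (L1 <= L2)%nat -> Q a L1 -> Q a L2) ->
  (forall a, a \in s -> exists L, Q a L) -> exists L, forall a, a \in s -> Q a L.
Proof.
move=> Qm; elim: s => [|x s IH] H; first by exists 0%N.
have [Lx Hx] := H x (mem_head _ _).
have [Ls Hs] : exists L, forall a, a \in s -> Q a L.
  by apply: IH => a ha; apply: H; rewrite in_cons ha orbT.
exists (maxn Lx Ls) => a; rewrite in_cons => /orP[/eqP->|ha].
  by apply: Qm Hx; rewrite leq_maxl.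
by apply: Qm (Hs a ha); rewrite leq_maxr.
Qed.

Lemma sum_ge (T : eqType) (s : seq T) (f : T -> R) x :
  (forall y, 0 <= f y) -> x \in s -> f x <= \sum_(y <- s) f y.
Proof.
move=> f0; elim: s => [//|y s IH]; rewrite in_cons big_cons => /orP[/eqP->|hx].
  by rewrite lerDl sumr_ge0.
by rewrite (le_trans (IH hx)) // lerDr.
Qed.

Lemma bernoulli_le (x : R) n : 0 <= x <= 1 -> 1 - n%:R * x <= (1 - x) ^+ n.
Proof.
move=> /andP[x0 x1]; elim: n => [|n IH]; first by rewrite mul0r subr0 expr0.
rewrite exprS.
have h : 0 <= 1 - x by rewrite subr_ge0.
apply: (le_trans _ (ler_wpM2l h IH)).
rewrite -natr1 mulrDl mul1r.
have : 0 <= n%:R * x * x by rewrite mulr_ge0 // mulr_ge0.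
lra.
Qed.

Definition adm (N M : nat) (As : seq 'M[R]_(N, M)) (A : nat -> 'M[R]_(N, M)) :=
  forall n : nat, (1 <= n)%nat -> A n \in As.
Definition bad (N M : nat) (nrm : 'M[R]_N -> R) (Bbar : nat -> 'M[R]_(M, N)) (p L : nat)
  (A : nat -> 'M[R]_(N, M)) :=
  forall k : nat, (1 <= k)%nat -> (k * p <= L)%nat -> 1/2 <= nrm (prodAB A Bbar (k * p)).
Definition Inf (N M : nat) (As : seq 'M[R]_(N, M)) (nrm : 'M[R]_N -> R) (Bbar : nat -> 'M[R]_(M, N))
  (p n : nat) (A : nat -> 'M[R]_(N, M)) :=
  forall L : nat, exists A', adm As A' /\ (forall i : nat, (1 <= i <= n)%nat -> A' i = A i)
     /\ bad nrm Bbar p L A'.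
Definition upd (T : Type) (A : nat -> T) (m : nat) (a : T) := fun i : nat => if i == m then a else A i.

Lemma bad_mono (N M : nat) (nrm : 'M[R]_N -> R) (Bbar : nat -> 'M[R]_(M, N)) (p L1 L2 : nat) A :
  (L1 <= L2)%nat -> bad nrm Bbar p L2 A -> bad nrm Bbar p L1 A.
Proof. by move=> le h k k1 kL; apply: h => //; apply: leq_trans le. Qed.

Lemma step (N M : nat) (As : seq 'M[R]_(N, M)) (nrm : 'M[R]_N -> R) (Bbar : nat -> 'M[R]_(M, N))
  (p n : nat) A :
  Inf As nrm Bbar p n A -> exists a, a \in As /\ Inf As nrm Bbar p n.+1 (upd A n.+1 a).
Proof.
move=> HI; apply: contrapT => Hn.
pose Q a L := ~ (exists A', adm As A' /\ (forall i : nat, (1 <= i <= n.+1)%nat -> A' i = upd A n.+1 a i)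
     /\ bad nrm Bbar p L A').
have H1 : forall a, a \in As -> exists L, Q a L.
  move=> a ha; apply/existsNP => HL; apply: Hn; exists a; split=> //.

have mono : forall a L1 L2, (L1 <= L2)%nat -> Q a L1 -> Q a L2.
  move=> a L1 L2 le h [A' [h1 [h2 h3]]]; apply: h; exists A'; split=> //; split=> //.
  exact: bad_mono h3.
have [L HL] := fin_bound mono H1.
have [A' [hadm [hag hbad]]] := HI L.
have hA := hadm n.+1 isT; apply: (HL _ hA); exists A'; split=> //; split=> // i /andP[i1 i2].
rewrite /upd; case: eqP => [->//|ne]; apply: hag; rewrite i1 /=.
move/eqP: ne; lia.
Qed.

Fixpoint build (T : Type) (A0 : nat -> T) (g : nat -> (nat -> T) -> T) (n : nat) : nat -> T :=
  match n with 0 => A0 | m.+1 => upd (build A0 g m) m.+1 (g m (build A0 g m)) end.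

Lemma build_stable (T : Type) (A0 : nat -> T) g (n i : nat) :
  (1 <= i <= n)%nat -> build A0 g n i = build A0 g i i.
Proof.
elim: n => [|n IH] hi; first by move: hi; lia.
rewrite /= /upd; case: eqP => [->|ne]; first by rewrite /= /upd eqxx.
apply: IH; move/eqP: ne; move: hi; lia.
Qed.

Lemma konig (N M : nat) (As : seq 'M[R]_(N, M)) (nrm : 'M[R]_N -> R) (Bbar : nat -> 'M[R]_(M, N))
  (p : nat) (A0 : nat -> 'M[R]_(N, M)) :
  (0 < p)%nat ->
  (forall A, adm As A -> (fun n : nat => nrm (prodAB A Bbar n)) @ \oo --> (0 : R)) ->
  ~ Inf As nrm Bbar p 0 A0.
Proof.
move=> p0 Hc HI0.
have : forall nA : nat * (nat -> 'M[R]_(N, M)), exists a,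
    Inf As nrm Bbar p nA.1 nA.2 -> a \in As /\ Inf As nrm Bbar p nA.1.+1 (upd nA.2 nA.1.+1 a).
  move=> [n A] /=; case: (pselect (Inf As nrm Bbar p n A)) => [h|h].
    by have [a ha] := step h; exists a.
  by exists 0.
move=> /choice [g' Hg'].
pose g n A := g' (n, A).
pose B := build A0 g.
have Binf : forall n, Inf As nrm Bbar p n (B n).
  elim=> [//|n IH]; exact: (Hg' (n, B n) IH).2.
pose As' := fun i => B i i.
have adm' : adm As As'.
  case=> [//|i] _; rewrite /As' /B /= /upd eqxx.
  exact: (Hg' (i, B i) (Binf i)).1.
have big : forall k, (1 <= k)%nat -> 1/2 <= nrm (prodAB As' Bbar (k * p)).
  move=> k k1; have [A' [h1 [h2 h3]]] := Binf (k * p)%nat (k * p)%nat.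
  rewrite -(prodAB_ext (A := A') (B := Bbar)) //; first exact: h3.
  move=> i hi; rewrite h2 // /As' /B; exact: build_stable.
have h2 : (0 : R) < 1/2 by rewrite divr_gt0.
have [N0 _ HN0] := @cvgr0_norm_lt R R^o nat \oo _ (fun n => nrm (prodAB As' Bbar n)) (Hc _ adm') (1/2) h2.
have hk : (N0 <= N0.+1 * p)%nat by apply: leq_trans (leqnSn N0) _; exact: leq_pmulr.
have := HN0 _ hk; have := big N0.+1 isT.
have := ler_norm (nrm (prodAB As' Bbar (N0.+1 * p))).
lra.
Qed.

Lemma prod_bound (N M : nat) (As : seq 'M[R]_(N, M)) (Bs : seq 'M[R]_(M, N)) (nrm : 'M[R]_N -> R)
  (A : nat -> 'M[R]_(N, M)) (B : nat -> 'M[R]_(M, N)) :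
  (forall X, 0 <= nrm X) -> submultiplicative nrm -> adm As A ->
  (forall i : nat, (1 <= i)%nat -> B i \in Bs) ->
  forall n : nat, nrm (prodAB A B n) <=
     nrm 1%:M * (1 + \sum_(a <- As) \sum_(b <- Bs) nrm (a *m b)) ^+ n.
Proof.
move=> n0 sm hA hB; elim=> [|n IH] /=; first by rewrite expr0 mulr1.
apply: (le_trans (sm _ _)).
rewrite exprS mulrCA; apply: ler_pM => //.
have h1 : nrm (A n.+1 *m B n.+1) <= \sum_(b <- Bs) nrm (A n.+1 *m b).
  by apply: (sum_ge (f := fun b => nrm (A n.+1 *m b))) => //; apply: hB.
have h2 := sum_ge (f := fun a => \sum_(b <- Bs) nrm (a *m b)) (fun y => sumr_ge0 _ (fun b _ => n0 _)) (hA n.+1 isT).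
have := le_trans h1 h2; lra.
Qed.

Lemma per_k (T : Type) (Bbar : nat -> T) (p : nat) :
  (forall n : nat, (1 <= n)%nat -> Bbar (n + p)%nat = Bbar n) ->
  forall k i : nat, (1 <= i)%nat -> Bbar (i + k * p)%nat = Bbar i.
Proof.
move=> Hp; elim=> [|k IH] i hi; first by rewrite mul0n addn0.
by rewrite mulSn addnA addnAC Hp ?IH // (leq_trans hi) ?leq_addr.
Qed.

Unset Implicit Arguments.
Unset Strict Implicit.

Theorem theorem2 (N M : nat) (As : seq 'M[R]_(N, M)) (Bs : seq 'M[R]_(M, N))
    (nrm : 'M[R]_N -> R) (Bbar : nat -> 'M[R]_(M, N)) :
  (0 < N)%nat -> (0 < M)%nat ->
  is_matrix_norm nrm -> submultiplicative nrm ->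
  (forall n : nat, (1 <= n)%nat -> Bbar n \in Bs) ->
  periodic_seq Bbar ->
  (forall A : nat -> 'M[R]_(N, M), (forall n : nat, (1 <= n)%nat -> A n \in As) ->
     (fun n : nat => nrm (prodAB A Bbar n)) @ \oo --> (0 : R)) ->
  exists (C lam : R), 0 < C /\ 0 < lam < 1 /\
    forall A : nat -> 'M[R]_(N, M), (forall n : nat, (1 <= n)%nat -> A n \in As) ->
      forall n : nat, (1 <= n)%nat -> nrm (prodAB A Bbar n) <= C * lam ^+ n.
Proof.
move=> N0 M0 [n0 n1 nZ nD] sm HB [p [p0 Hper]] Hc.
have hc : forall A, adm As A -> (fun n : nat => nrm (prodAB A Bbar n)) @ \oo --> (0 : R) := Hc.
have /existsNP [L HL] := konig (A0 := fun _ => 0) p0 hc.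
have HL' : forall A, adm As A -> exists k : nat,
    [/\ (1 <= k)%nat, (k * p <= L)%nat & nrm (prodAB A Bbar (k * p)) < 1/2].
  move=> A hA; have : ~ bad nrm Bbar p L A.
    move=> hb; apply: HL; exists A; split=> //; split=> // i /andP[h1 h2].
    by exfalso; move: h1 h2; lia.
  move=> /existsNP [k /not_implyP [k1 /not_implyP [kL hlt]]].
  exists k; split=> //; rewrite ltNge; apply/negP => h; exact: hlt h.
pose L1 := L.+1.
pose K := 1 + \sum_(a <- As) \sum_(b <- Bs) nrm (a *m b).
have K1 : 1 <= K by rewrite /K lerDl sumr_ge0 // => a _; rewrite sumr_ge0.
pose D := nrm 1%:M * K ^+ L1.
have D0 : 0 <= D by rewrite /D mulr_ge0 // exprn_ge0 // (le_trans ler01 K1).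
have main : forall (n : nat) A, adm As A ->
    nrm (prodAB A Bbar n) <= D * (1/2) ^+ (n %/ L1).
  elim/ltn_ind => n IH A hA.
  have [k [k1 kL hlt]] := HL' A hA.
  have kp1 : (1 <= k * p)%nat by rewrite muln_gt0 k1 p0.
  move: hlt kL kp1; set m := (k * p)%nat => hlt kL kp1.
  case: (ltnP n m) => hn.
    rewrite divn_small ?expr0 ?mulr1; last by rewrite /L1; lia.
    apply: le_trans (prod_bound n0 sm hA HB n) _.
    by rewrite /D ler_wpM2l // ler_weXn2l //; rewrite /L1; lia.
  have e : n = (n - m + m)%nat by rewrite subnK.
  rewrite e prodAB_shift.
  pose A' := fun i : nat => A (i + m)%nat.
  have hA' : adm As A' by move=> i hi; apply: hA; lia.
  rewrite (prodAB_ext (A' := A') (B' := Bbar)) //; last first.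
    by move=> i /andP[hi _]; rewrite /m per_k.
  apply: le_trans (sm _ _) _.
  have IH' := IH (n - m)%nat ltac:(lia) A' hA'.
  apply: le_trans (ler_pM (n0 _) (n0 _) IH' (ltW hlt)) _.
  rewrite -mulrA ler_wpM2l // -exprSr; apply: ler_wiXn2l; [lra|lra|].
  rewrite -e.
  apply: leq_trans (leq_div2r L1 (_ : (n <= n - m + L1)%nat)) _; first by rewrite /L1; lia.
  by rewrite divnDr ?dvdnn // divnn addn1.
have hL : 1 <= L1%:R :> R by rewrite ler1n.
have h2L : 0 < 2 * L1%:R :> R by rewrite mulr_gt0 // (lt_le_trans ltr01 hL).
pose y := (2 * L1%:R)^-1 + (0 * D).
have hx0 : 0 < y by rewrite /y mul0r addr0 invr_gt0.
have hx : y * (2 * L1%:R) = 1 by rewrite /y mul0r addr0 mulVf // gt_eqF.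
have hLy : L1%:R * y = 1/2 by rewrite /y mul0r addr0; field; rewrite pnatr_eq0.
clearbody y.
have hxle : y <= 1/2 by nra.
pose lam := 1 - y.
have lamL : 1/2 <= lam ^+ L1.
  apply: le_trans (bernoulli_le L1 _) => //; last by apply/andP; split; [exact: ltW|lra].
  rewrite hLy.
  lra.
have lam0 : 0 <= lam.
  rewrite /lam; lra.
exists (2 * D + 1), lam; split; first lra.
split; first by apply/andP; split; rewrite /lam; lra.
move=> A hA n _.
apply: le_trans (main n A hA) _.
set q := (n %/ L1)%nat.
have hq : (1/2) ^+ q <= 2 * lam ^+ n.
  have h1 : lam ^+ ((q.+1) * L1) <= lam ^+ n.
    apply: ler_wiXn2l => //; first by rewrite /lam; lra.
    by apply: ltnW; apply: ltn_ceil.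
  have h2 : (1/2) ^+ q.+1 <= lam ^+ ((q.+1) * L1).
    rewrite mulnC exprM; apply: lerXn2r => //; rewrite ?nnegrE //.
    exact: exprn_ge0.
  have h3 := le_trans h2 h1.
  move: h3; rewrite exprSr; lra.
have hl : 0 <= lam ^+ n by exact: exprn_ge0.
nra.
Qed.
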